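(* Let $A$ be a first countable locally convex topological vector space over $\mathbb C$, give $A^\vee$ the topology of uniform convergence on compact sets, and let $K\subset A^\vee$ be compact. Then $\bigcup_{\phi\in K}\ker\phi$ is closed in $A$.
   Context: $A^\vee$ is the space of continuous linear functionals on $A$, with subbasis $\{\phi:\phi(C)\subset U\}$, $C\subset A$ compact, $U\subset\mathbb C$ open. *)

(* Defs.v *)
From HB Require Import structures.
From mathcomp Require Import all_boot all_order all_algebra.
From mathcomp Require Import all_classical all_reals all_analysis.
From mathcomp Require Import complex.
Set Implicit Arguments. Unset Strict Implicit. Unset Printing Implicit Defensive.
Import Order.TTheory GRing.Theory Num.Theory.
Import numFieldTopology.Exports numFieldNormedType.Exports.
Local Open Scope classical_set_scope.
Local Open Scope ring_scope.

Definition first_countable (T : topologicalType) : Prop :=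
  forall x : T, exists B : set_system T,
    [/\ countable B, (forall b, B b -> nbhs x b) &
        (forall U, nbhs x U -> exists2 b, B b & b `<=` U)].

Definition continuous_linear_functional (K : numFieldType) (A : tvsType K)
    (phi : A -> K) : Prop :=
  (forall (a : K) (x y : A), phi (a *: x + y) = a * phi x + phi y) /\
  continuous phi.

Definition Cplx (R : realType) : numClosedFieldType := R[i].

(* Main.v *)
Require Import Defs.
From HB Require Import structures.
From mathcomp Require Import all_boot all_order all_algebra.
From mathcomp Require Import all_classical all_reals all_analysis.
From mathcomp Require Import complex.
Import Order.TTheory GRing.Theory Num.Theory.
Import numFieldTopology.Exports numFieldNormedType.Exports.
Local Open Scope classical_set_scope.
Local Open Scope ring_scope.
Lemma seq_compact (T : topologicalType) (z : nat -> T) (x : T) :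
  z @ \oo --> x -> compact ([set x] `|` range z).
Proof.
move=> zx F PF FC.
have [clx|nclx] := pselect (cluster F x).
  by exists x; split => //; left.
have : exists E V, [/\ F E, nbhs x V & E `&` V = set0].
  apply: contra_notP nclx => H E V FE VV; apply/set0P/eqP => EV0.
  by apply: H; exists E, V.
move=> [E [V [FE Vx EV0]]].
have [M _ HM] : \forall n \near \oo, V (z n) by exact: zx.
pose D := z @` [set n | (n < M)%N].
have FD : F D.
  apply: filterS (filterI FC FE) => c [[->|[n _ <-]] Ec].
    exfalso; have : (E `&` V) x by split => //; exact: nbhs_singleton.
    by rewrite EV0.
  exists n => //=; rewrite ltnNge; apply/negP => Mn.
  have : (E `&` V) (z n) by split => //; exact: HM.
  by rewrite EV0.
have finD : finite_set D by apply: finite_image; exact: (finite_II M).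
have [c [Dc clc]] := finite_compact finD PF FD.
by exists c; split => //; right; case: Dc => n _ <-; exists n.
Qed.

Theorem lemma7p9 (R : realType) (A : tvsType (Cplx R))
    (hA : first_countable A)
    (K : set {compact-open, A -> Cplx R})
    (hKdual : forall phi, K phi -> continuous_linear_functional phi)
    (hK : compact K) :
  closed (\bigcup_(phi in K) [set x : A | phi x = 0]).
Proof.
move=> x clx.
have [B [cB Bx Bb]] := hA x.
have [B0|Bs] := pfcard_geP cB.
  by have [b] := Bb setT filterT; rewrite B0.
have [g gB] := iffLR surjfunPex Bs.
have gN k : nbhs x (g k) by apply: Bx; rewrite gB; exists k.
have Wn n : nbhs x (\bigcap_(k in [set k | (k <= n)%N]) g k).
  elim: n => [|n IH].
    by apply: filterS (gN 0%N) => z gz k /=; rewrite leqn0 => /eqP ->.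
  apply: filterS (filterI (gN n.+1) IH) => z [gz Hz] k /=.
  rewrite leq_eqVlt => /orP [/eqP -> //|]; rewrite ltnS => kn.
  exact: Hz.
have y_ex n : exists y, (\bigcup_(phi in K) [set x : A | phi x = 0]) y /\
    (\bigcap_(k in [set k | (k <= n)%N]) g k) y.
  by have [y [? ?]] := clx _ (Wn n); exists y.
pose y n := projT1 (cid (y_ex n)).
have yU n : (\bigcup_(phi in K) [set x : A | phi x = 0]) (y n).
  by case: (projT2 (cid (y_ex n))).
have yW n : (\bigcap_(k in [set k | (k <= n)%N]) g k) (y n).
  by case: (projT2 (cid (y_ex n))).
have yx : y @ \oo --> x.
  move=> V /Bb [b]; rewrite gB => -[m _ <-] bV.
  by exists m => // n /= mn; apply: bV; exact: yW.
have [//|Ux] := pselect ((\bigcup_(phi in K) [set x : A | phi x = 0]) x).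
exfalso.
have /compact_near_coveringP cov := hK.
have Hloc : forall phi : {compact-open, A -> Cplx R}, K phi ->
   \forall h \near phi & n \near \oo, h (y n) != 0.
  move=> phi Kphi.
  have [_ cphi] := hKdual phi Kphi.
  have phix0 : phi x != 0.
    by apply/eqP => phix; apply: Ux; exists phi.
  have Hc : (phi \o y) @ \oo --> phi x.
    by apply: continuous_cvg => //; exact: cphi.
  move/cvgrPdist_lt: Hc => /(_ `|phi x| _).
  case; first by rewrite normr_gt0.
  move=> N _ HN.
  pose C := [set x] `|` range (fun k => y (k + N)%N).
  have cC : compact C.
    apply: seq_compact.
    exact: (@cvg_comp _ _ _ (addn^~ N) y \oo \oo _ (cvg_addnr N) yx).
  pose W := [set h : {compact-open, A -> Cplx R} | h @` C `<=` ~` [set 0]].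
  have oW : open W.
    apply: compact_open_open => //.
    apply: closed_openC; apply: accessible_closed_set1.
    apply: hausdorff_accessible; exact: norm_hausdorff.
  have Wphi : W phi.
    move=> _ [z [->|[k _ <-]] <-] /= /eqP; first by apply/negP.
    have := HN (k + N)%N (leq_addl _ _) => /=.
    by move=> + /eqP H; rewrite H subr0 ltxx.
  exists (W, [set n | (N <= n)%N]); first split => //.
    by apply: open_nbhs_nbhs; split.
    by exists N.
  move=> [h n] [/= Wh Nn].
  apply/eqP => hy; apply: (Wh (h (y n))) => //.
  exists (y n) => //; right; exists (n - N)%N => //.
  by rewrite subnK.
have [N _ HN] := cov nat \oo (fun n (h : {compact-open, A -> Cplx R}) => h (y n) != 0) _ Hloc.
have [phi Kphi /= phi0] := yU N.
by have := HN N (leqnn N) phi Kphi; rewrite /= phi0 eqxx.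
Qed.
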